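(* Let $d\geq1$, $p\in[1,\infty)\setminus\{2\}$, and $\lambda_1,\dots,\lambda_d>0$. Define $g:(0,\infty)\to(0,\infty)$ by $$g(\beta)=\left(\frac{\sum_{i=1}^{d}\frac{1}{1+\beta^{1/p}\lambda_i}}{\sum_{i=1}^{d}\frac{\lambda_i}{1+\beta^{1/p}\lambda_i}}\right)^{\frac{p}{3p-1}}.$$ Then $g$ has a unique fixed point $\beta^*_{\mathrm{vol}}>0$, and for every initial value $\beta_0>0$ the iterates $\beta_{n+1}=g(\beta_n)$, $n=0,1,2,\dots$, satisfy $\lim_{n\to\infty}\beta_n=\beta^*_{\mathrm{vol}}$. *)

(* Defs.v *)
From Stdlib Require Import Reals Lra.
Open Scope R_scope.

Fixpoint sumR (d : nat) (f : nat -> R) : R :=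
  match d with
  | O => 0
  | S k => sumR k f + f k
  end.

Definition g_vol (d : nat) (p : R) (lam : nat -> R) (beta : R) : R :=
  Rpower
    (sumR d (fun i => 1 / (1 + Rpower beta (1 / p) * lam i)) /
     sumR d (fun i => lam i / (1 + Rpower beta (1 / p) * lam i)))
    (p / (3 * p - 1)).

Fixpoint g_iter (d : nat) (p : R) (lam : nat -> R) (beta0 : R) (n : nat) : R :=
  match n with
  | O => beta0
  | S m => g_vol d p lam (g_iter d p lam beta0 m)
  end.

(* Main.v *)
Require Import Defs.
From Stdlib Require Import Reals Lra Psatz.
Open Scope R_scope.

Lemma ln_le' x y : 0 < x -> x <= y -> ln x <= ln y.
Proof. intros Hx [H|H]. left; apply ln_increasing; auto. subst; lra. Qed.

Lemma sumR_le d f g : (forall i, (i < d)%nat -> f i <= g i) -> sumR d f <= sumR d g.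
Proof. induction d; simpl; intros H. lra. apply Rplus_le_compat; auto. Qed.

Lemma sumR_nonneg d f : (forall i, (i < d)%nat -> 0 <= f i) -> 0 <= sumR d f.
Proof. induction d; simpl; intros H. lra. specialize (IHd (fun i Hi => H i ltac:(lia))).
  specialize (H d ltac:(lia)). lra. Qed.

Lemma sumR_pos d f : (1 <= d)%nat -> (forall i, (i < d)%nat -> 0 < f i) -> 0 < sumR d f.
Proof. destruct d as [|k]; intros Hd H. lia. simpl.
  assert (0 <= sumR k f) by (apply sumR_nonneg; intros; left; apply H; lia).
  specialize (H k ltac:(lia)). lra. Qed.

Lemma sumR_scal d s f : s * sumR d f = sumR d (fun i => s * f i).
Proof. induction d; simpl. ring. rewrite <- IHd. ring. Qed.

Lemma frac_le a b c e : 0 < b -> 0 < e -> a * e <= c * b -> a / b <= c / e.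
Proof. intros Hb He H.
  replace (a/b) with ((a*e) * /(b*e)) by (field; lra).
  replace (c/e) with ((c*b) * /(b*e)) by (field; lra).
  apply Rmult_le_compat_r; auto. left; apply Rinv_0_lt_compat; nra. Qed.

Definition AA d lam s := sumR d (fun i => 1 / (1 + s * lam i)).
Definition BB d lam s := sumR d (fun i => lam i / (1 + s * lam i)).
Definition rr d lam s := AA d lam s / BB d lam s.

Section S.
Variables (d : nat) (lam : nat -> R).
Hypothesis Hd : (1 <= d)%nat.
Hypothesis Hl : forall i, (i < d)%nat -> 0 < lam i.

Lemma AA_pos s : 0 < s -> 0 < AA d lam s.
Proof. intros Hs; apply sumR_pos; auto; intros i Hi; specialize (Hl i Hi).
  apply Rdiv_lt_0_compat; nra. Qed.
Lemma BB_pos s : 0 < s -> 0 < BB d lam s.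
Proof. intros Hs; apply sumR_pos; auto; intros i Hi; specialize (Hl i Hi).
  apply Rdiv_lt_0_compat; nra. Qed.

Section T.
Variables s1 s2 : R.
Hypothesis H1 : 0 < s1.
Hypothesis H12 : s1 <= s2.

Lemma A_dec : AA d lam s2 <= AA d lam s1.
Proof. apply sumR_le; intros i Hi; specialize (Hl i Hi). apply frac_le; nra. Qed.
Lemma B_dec : BB d lam s2 <= BB d lam s1.
Proof. apply sumR_le; intros i Hi; specialize (Hl i Hi). apply frac_le; nra. Qed.
Lemma sA_inc : s1 * AA d lam s1 <= s2 * AA d lam s2.
Proof. unfold AA; rewrite !sumR_scal; apply sumR_le; intros i Hi; specialize (Hl i Hi).
  replace (s1 * (1 / (1 + s1 * lam i))) with (s1 / (1 + s1 * lam i)) by (field; nra).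
  replace (s2 * (1 / (1 + s2 * lam i))) with (s2 / (1 + s2 * lam i)) by (field; nra).
  apply frac_le; nra. Qed.
Lemma sB_inc : s1 * BB d lam s1 <= s2 * BB d lam s2.
Proof. unfold BB; rewrite !sumR_scal; apply sumR_le; intros i Hi; specialize (Hl i Hi).
  replace (s1 * (lam i / (1 + s1 * lam i))) with ((s1 * lam i) / (1 + s1 * lam i)) by (field; nra).
  replace (s2 * (lam i / (1 + s2 * lam i))) with ((s2 * lam i) / (1 + s2 * lam i)) by (field; nra).
  apply frac_le; nra. Qed.

Lemma rr_up : rr d lam s2 <= (s2 / s1) * rr d lam s1.
Proof. unfold rr.
  pose proof A_dec. pose proof B_dec. pose proof sB_inc. pose proof sA_inc.
  pose proof (AA_pos s1 H1). pose proof (AA_pos s2 ltac:(lra)).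
  pose proof (BB_pos s1 H1). pose proof (BB_pos s2 ltac:(lra)).
  replace (s2 / s1 * (AA d lam s1 / BB d lam s1)) with ((s2 * AA d lam s1) / (s1 * BB d lam s1)) by (field; lra).
  apply frac_le. lra. nra.
  assert (K : AA d lam s2 * (s1 * BB d lam s1) <= AA d lam s1 * (s2 * BB d lam s2))
    by (apply Rmult_le_compat; try lra; apply Rmult_le_pos; lra).
  lra. Qed.

Lemma rr_down : (s1 / s2) * rr d lam s1 <= rr d lam s2.
Proof. unfold rr.
  pose proof A_dec. pose proof B_dec. pose proof sB_inc. pose proof sA_inc.
  pose proof (AA_pos s1 H1). pose proof (AA_pos s2 ltac:(lra)).
  pose proof (BB_pos s1 H1). pose proof (BB_pos s2 ltac:(lra)).
  replace (s1 / s2 * (AA d lam s1 / BB d lam s1)) with ((s1 * AA d lam s1) / (s2 * BB d lam s1)) by (field; lra).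
  apply frac_le. nra. lra.
  assert (K : (s1 * AA d lam s1) * BB d lam s2 <= (s2 * AA d lam s2) * BB d lam s1)
    by (apply Rmult_le_compat; try lra; apply Rmult_le_pos; lra).
  lra. Qed.
End T.

Lemma rr_pos s : 0 < s -> 0 < rr d lam s.
Proof. intros; unfold rr; apply Rdiv_lt_0_compat; [apply AA_pos|apply BB_pos]; auto. Qed.

Lemma ln_rr_lip p t1 t2 : 0 < p -> t1 <= t2 ->
  Rabs (ln (rr d lam (exp (t2/p))) - ln (rr d lam (exp (t1/p)))) <= (t2 - t1) / p.
Proof. intros Hp Ht.
  assert (E : exp (t1/p) <= exp (t2/p)).
  { destruct (Req_dec t1 t2). subst; lra. left; apply exp_increasing.
    unfold Rdiv; apply Rmult_lt_compat_r. apply Rinv_0_lt_compat; lra. lra. }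
  pose proof (exp_pos (t1/p)). pose proof (exp_pos (t2/p)).
  pose proof (rr_up _ _ H E). pose proof (rr_down _ _ H E).
  pose proof (rr_pos _ H). pose proof (rr_pos _ H0).
  assert (Q1 : exp (t2/p) / exp (t1/p) = exp ((t2 - t1)/p)).
  { replace ((t2-t1)/p) with (t2/p + - (t1/p)) by (field; lra). rewrite exp_plus, exp_Ropp. field. lra. }
  assert (Q2 : exp (t1/p) / exp (t2/p) = exp (- ((t2 - t1)/p))).
  { replace (-((t2-t1)/p)) with (t1/p + - (t2/p)) by (field; lra). rewrite exp_plus, exp_Ropp. field. lra. }
  rewrite Q1 in H1. rewrite Q2 in H2.
  apply ln_le' in H1; [|assumption]. apply ln_le' in H2; [|apply Rmult_lt_0_compat; auto; apply exp_pos].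
  rewrite ln_mult, ln_exp in H1 by (auto; apply exp_pos).
  rewrite ln_mult, ln_exp in H2 by (auto; apply exp_pos).
  apply Rabs_le; lra. Qed.
End S.

Definition FF d p lam t := ln (g_vol d p lam (exp t)).

Lemma FF_eq d p lam t : 0 < p -> FF d p lam t = p / (3 * p - 1) * ln (rr d lam (exp (t / p))).
Proof. intros Hp. unfold FF, g_vol. rewrite ln_Rpower.
  replace (Rpower (exp t) (1 / p)) with (exp (t / p)).
  reflexivity. unfold Rpower. rewrite ln_exp. f_equal. field. lra. Qed.

Lemma FF_lip d p lam : (1 <= d)%nat -> 1 <= p -> (forall i, (i < d)%nat -> 0 < lam i) ->
  forall x y, Rabs (FF d p lam x - FF d p lam y) <= / 2 * Rabs (x - y).
Proof. intros Hd Hp Hl.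
  assert (K : forall x y, y <= x -> Rabs (FF d p lam x - FF d p lam y) <= / 2 * Rabs (x - y)).
  { intros x y Hxy. rewrite !FF_eq by lra.
    pose proof (ln_rr_lip d lam Hd Hl p y x ltac:(lra) Hxy) as L.
    set (u := ln (rr d lam (exp (x / p)))) in *.
    set (v := ln (rr d lam (exp (y / p)))) in *.
    replace (p / (3 * p - 1) * u - p / (3 * p - 1) * v) with (p / (3 * p - 1) * (u - v)) by ring.
    rewrite Rabs_mult, (Rabs_right (p / (3*p-1))) by (left; apply Rdiv_lt_0_compat; lra).
    rewrite (Rabs_right (x - y)) by lra.
    apply Rle_trans with (p / (3 * p - 1) * ((x - y) / p)).
    apply Rmult_le_compat_l; auto. left; apply Rdiv_lt_0_compat; lra.
    replace (p / (3 * p - 1) * ((x - y) / p)) with ((x - y) / (3 * p - 1)) by (field; lra).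
    replace (/2 * (x - y)) with ((x - y) / 2) by field.
    apply frac_le; nra. }
  intros x y. destruct (Rle_or_lt y x). auto.
  rewrite Rabs_minus_sym, (Rabs_minus_sym x). apply K; lra. Qed.

Fixpoint itF (F : R -> R) (n : nat) (x : R) : R :=
  match n with O => x | S m => F (itF F m x) end.

Lemma contraction (F : R -> R) : (forall x y, Rabs (F x - F y) <= / 2 * Rabs (x - y)) ->
  exists t, F t = t /\ (forall u, F u = u -> u = t) /\
    forall x0, Un_cv (fun n => itF F n x0) t.
Proof. intros HF.
  set (h := fun x => x - F x).
  assert (Hc : continuity h).
  { intros x eps Heps. exists (eps / 2). split. lra.
    intros y [_ Hy]. simpl in *. unfold R_dist in *. unfold h.
    pose proof (HF y x).
    replace (y - F y - (x - F x)) with ((y - x) - (F y - F x)) by ring.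
    eapply Rle_lt_trans. apply Rabs_triang. rewrite Rabs_Ropp. lra. }
  set (M := 2 * Rabs (F 0) + 1).
  assert (HM : 0 < M) by (unfold M; pose proof (Rabs_pos (F 0)); lra).
  assert (Ha : h (- M) < 0).
  { unfold h. pose proof (HF (-M) 0). rewrite Rminus_0_r, Rabs_Ropp, (Rabs_right M) in H by lra.
    pose proof (Rle_abs (F 0)). pose proof (Rle_abs (- F 0)). rewrite Rabs_Ropp in H1.
    pose proof (Rle_abs (F (-M) - F 0)). pose proof (Rle_abs (-(F (-M) - F 0))). rewrite Rabs_Ropp in H3.
    unfold M in *. lra. }
  assert (Hb : 0 < h M).
  { unfold h. pose proof (HF M 0). rewrite Rminus_0_r, (Rabs_right M) in H by lra.
    pose proof (Rle_abs (F 0)). pose proof (Rle_abs (- F 0)). rewrite Rabs_Ropp in H1.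
    pose proof (Rle_abs (F M - F 0)). pose proof (Rle_abs (-(F M - F 0))). rewrite Rabs_Ropp in H3.
    unfold M in *. lra. }
  destruct (IVT h (-M) M Hc ltac:(lra) Ha Hb) as [t [_ Ht]].
  unfold h in Ht. exists t. split. lra. split.
  - intros u Hu. pose proof (HF u t). rewrite Hu in H.
    replace (F t) with t in H by lra.
    pose proof (Rabs_pos (u - t)).
    assert (Rabs (u - t) = 0) by lra.
    destruct (Req_dec u t); auto. exfalso. apply (Rabs_no_R0 (u - t)); auto. lra.
  - intros x0.
    assert (B : forall n, Rabs (itF F n x0 - t) <= (/2) ^ n * Rabs (x0 - t)).
    { induction n; simpl. lra. replace t with (F t) at 1 by lra.
      eapply Rle_trans. apply HF. rewrite Rmult_assoc. apply Rmult_le_compat_l; lra. }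
    intros eps Heps.
    set (K := Rabs (x0 - t)).
    assert (HK : 0 <= K) by apply Rabs_pos.
    destruct (pow_lt_1_zero (/2) ltac:(rewrite Rabs_right; lra) (eps / (K + 1)))
      as [N HN]. apply Rdiv_lt_0_compat; lra.
    exists N. intros n Hn. unfold R_dist. specialize (HN n Hn). specialize (B n).
    rewrite Rabs_right in HN by (apply Rle_ge, pow_le; lra).
    fold K in B.
    assert (0 <= (/2)^n) by (apply pow_le; lra).
    apply Rle_lt_trans with ((/2)^n * (K + 1)). nra.
    apply Rmult_lt_reg_r with (/ (K + 1)). apply Rinv_0_lt_compat; lra.
    rewrite Rmult_assoc, Rinv_r by lra. rewrite Rmult_1_r. exact HN.
Qed.

Lemma g_pos d p lam b : 0 < g_vol d p lam b.
Proof. unfold g_vol, Rpower. apply exp_pos. Qed.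

Theorem theorem3 (d : nat) (p : R) (lam : nat -> R) :
  (1 <= d)%nat -> 1 <= p -> p <> 2 ->
  (forall i, (i < d)%nat -> 0 < lam i) ->
  exists beta_star : R,
    0 < beta_star /\ g_vol d p lam beta_star = beta_star /\
    (forall b, 0 < b -> g_vol d p lam b = b -> b = beta_star) /\
    (forall beta0, 0 < beta0 -> Un_cv (g_iter d p lam beta0) beta_star).
Proof.
  intros Hd Hp Hp2 Hl.
  destruct (contraction (FF d p lam) (FF_lip d p lam Hd Hp Hl)) as [t [Ht [Hu Hc]]].
  exists (exp t). split; [apply exp_pos|]. split.
  { unfold FF in Ht. rewrite <- (exp_ln (g_vol d p lam (exp t))) by apply g_pos.
    rewrite Ht. reflexivity. }
  split.
  { intros b Hb Hg. assert (ln b = t).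
    { apply Hu. unfold FF. rewrite exp_ln by auto. rewrite Hg. reflexivity. }
    rewrite <- H. rewrite exp_ln; auto. }
  intros b0 Hb0.
  assert (E : forall n, g_iter d p lam b0 n = exp (itF (FF d p lam) n (ln b0))).
  { induction n; simpl. rewrite exp_ln; auto.
    rewrite IHn. unfold FF. rewrite exp_ln by apply g_pos. reflexivity. }
  pose proof (continuity_seq exp _ _ (derivable_continuous_pt _ _ (derivable_pt_exp t)) (Hc (ln b0))) as C.
  intros eps He. destruct (C eps He) as [N HN]. exists N. intros n Hn. rewrite E. apply HN; auto.
Qed.
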